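(* Let $q$ be odd, let $C_1,C_2$ be linear codes of length $n$ over $\mathbb{F}_q$ that are both $b$-symbol MDS codes, with $d_b(C_1)\le d_b(C_2)$ and $1\le b\le\min\{\dim C_1,\dim C_2\}$. Let $C=\{[\mathbf{u}+\mathbf{v},\mathbf{u}-\mathbf{v}]:\mathbf{u}\in C_1,\mathbf{v}\in C_2\}\subseteq\mathbb{F}_q^{2n}$. Then $$d_b(C_1)\le d_b(C)\le d_b(C_1)+d_b(C_2)-b.$$
   Context: For $\mathbf{x}\in\mathbb{F}_q^L$ and $1\le b\le L$, $\chi_b(\mathbf{x})=\{i:(x_i,\dots,x_{i+b-1})\ne\mathbf{0}\}$ (indices mod $L$), $w_b(\mathbf{x})=|\chi_b(\mathbf{x})|$, and $d_b(C)=\min_{\mathbf{0}\ne\mathbf{c}\in C}w_b(\mathbf{c})$. An $[n,k]_q$-linear code $C$ is a $b$-symbol MDS code if $d_b(C)=\min\{n-k+b,n\}$. *)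

(* Defs.v *)
From HB Require Import structures.
From mathcomp Require Import all_boot all_order all_algebra all_field.
Set Implicit Arguments. Unset Strict Implicit. Unset Printing Implicit Defensive.
Import GRing.Theory.
Local Open Scope ring_scope.

Definition cyc_idx (L : nat) (i : 'I_L) (j : nat) : 'I_L :=
  Ordinal (ltn_pmod (i + j) (leq_ltn_trans (leq0n i) (ltn_ord i))).

Definition chi_b (F : fieldType) (L b : nat) (x : 'rV[F]_L) : {set 'I_L} :=
  [set i : 'I_L | [exists j : 'I_b, x 0 (cyc_idx i j) != 0]].

Definition w_b (F : fieldType) (L b : nat) (x : 'rV[F]_L) : nat := #|chi_b b x|.

(* The default
   value L is an upper bound of every weight, so this is the true minimum
   whenever C has a nonzero codeword. *)
Definition d_b (F : finFieldType) (L b : nat) (pT : predType 'rV[F]_L) (C : pT) : nat :=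
  \big[minn/L]_(c : 'rV[F]_L | (c \in C) && (c != 0)) w_b b c.

Definition bsym_MDS (F : finFieldType) (n b : nat) (C : {vspace 'rV[F]_n}) : Prop :=
  d_b b C = minn (n - \dim C + b)%N n.

Definition plus_minus_code (F : finFieldType) (n : nat)
  (C1 C2 : {vspace 'rV[F]_n}) : {set 'rV[F]_(n + n)} :=
  [set row_mx (u + v) (u - v) | u in C1, v in C2].

(* Main.v *)
Require Import Defs.
From HB Require Import structures.
From mathcomp Require Import all_boot all_order all_algebra all_field.
From mathcomp Require Import zify ring.
Set Implicit Arguments. Unset Strict Implicit. Unset Printing Implicit Defensive.
Import GRing.Theory.

Section Helpers.
Local Open Scope ring_scope.


Lemma two_neq0 (F : finFieldType) : odd #|F| -> (2%:R : F) != 0.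
Proof.
move=> oddF; apply/negP => H.
have ch : (2%N \in [pchar F]) by rewrite inE /= H.
have := card_pprimeChar ch.
move: (logn _ _) => k /= E.
move: oddF; rewrite E.
case: k E => [|k] E.
  by have := finNzRing_gt1 F; rewrite E.
by rewrite expnS oddM.
Qed.


Lemma mod_cases (n i j : nat) : (i < n)%N -> (j < n)%N ->
  (((i + j) %% (n + n) = (i + j) %% n) /\ ((n + i + j) %% (n + n) = n + (i + j) %% n))%N \/
  (((i + j) %% (n + n) = n + (i + j) %% n) /\ ((n + i + j) %% (n + n) = (i + j) %% n))%N.
Proof.
move=> hi hj.
case: (ltnP (i + j) n) => h.
  left; rewrite !modn_small //; lia.
right.
have ha : ((i + j) %% (n + n) = i + j)%N by rewrite modn_small //; lia.
have hb : ((i + j) %% n = i + j - n)%N.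
  have e1 : (i + j = (i + j - n) + n)%N by lia.
  by rewrite {1}e1 modnDr modn_small //; lia.
have hc : ((n + i + j) %% (n + n) = i + j - n)%N.
  have e2 : (n + i + j = (i + j - n) + (n + n))%N by lia.
  by rewrite e2 modnDr modn_small //; lia.
rewrite ha hb hc; lia.
Qed.

Lemma rowmx_l (F : fieldType) n (x y : 'rV[F]_n) (p : 'I_(n + n)) (k : 'I_n) :
  val p = val k -> row_mx x y 0 p = x 0 k.
Proof. move=> h; have -> : p = lshift n k by apply: val_inj; rewrite /= h. by rewrite row_mxEl. Qed.

Lemma rowmx_r (F : fieldType) n (x y : 'rV[F]_n) (p : 'I_(n + n)) (k : 'I_n) :
  val p = (n + val k)%N -> row_mx x y 0 p = y 0 k.
Proof. move=> h; have -> : p = rshift n k by apply: val_inj; rewrite /= h. by rewrite row_mxEr. Qed.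

Lemma half0 (F : fieldType) (a b : F) : (2%:R : F) != 0 -> a + b = 0 -> a - b = 0 -> a = 0 /\ b = 0.
Proof.
move=> h2 h1 h3.
have ha : 2%:R * a = 0 by rewrite -[RHS](addr0 0) -{1}h1 -{1}h3; ring.
have hb : 2%:R * b = 0 by rewrite -[RHS](subr0 0) -{1}h1 -{1}h3; ring.
move/eqP: ha; move/eqP: hb; rewrite !mulf_eq0 (negPf h2) /= => /eqP -> /eqP -> //.
Qed.

Lemma wb_le (F : fieldType) n b (u v : 'rV[F]_n) : (2%:R:F) != 0 -> (b <= n)%N ->
  (w_b b u <= w_b b (row_mx (u+v) (u-v)))%N /\ (w_b b v <= w_b b (row_mx (u+v) (u-v)))%N.
Proof.
move=> h2 hbn.
set c := row_mx (u+v) (u-v).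
pose phi (i : 'I_n) : 'I_(n + n) := if lshift n i \in chi_b b c then lshift n i else rshift n i.
have phiK i : (val (phi i) %% n = i)%N.
  rewrite /phi; case: ifP => _ /=; last rewrite modnDl; exact: modn_small.
have phi_inj : injective phi.
  move=> i1 j1 e; apply: val_inj => /=; have := phiK i1; by rewrite e phiK => ->.
have claim (i : 'I_n) : (i \in chi_b b u) || (i \in chi_b b v) -> phi i \in chi_b b c.
  rewrite /phi; case: ifP => // hl.
  apply: contraLR => hr.
  have key (j : 'I_b) : u 0 (cyc_idx i j) = 0 /\ v 0 (cyc_idx i j) = 0.
    move: hl hr; rewrite !inE => /existsPn /(_ j) /negPn /eqP e1 /existsPn /(_ j) /negPn /eqP e2.
    have hj : (j < n)%N by apply: leq_trans (ltn_ord j) hbn.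
    have [[m1 m2]|[m1 m2]] := mod_cases (ltn_ord i) hj.
      rewrite (@rowmx_l _ _ _ _ _ (cyc_idx i j)) in e1; last by rewrite /= m1.
      rewrite (@rowmx_r _ _ _ _ _ (cyc_idx i j)) in e2; last by rewrite /= m2.
      by move: e1 e2; rewrite !mxE => e1 e2; apply: half0.
    rewrite (@rowmx_r _ _ _ _ _ (cyc_idx i j)) in e1; last by rewrite /= m1.
    rewrite (@rowmx_l _ _ _ _ _ (cyc_idx i j)) in e2; last by rewrite /= m2.
    by move: e1 e2; rewrite !mxE => e1 e2; apply: half0.
  rewrite negb_or !inE; apply/andP; split; apply/existsPn => j.
    by rewrite (proj1 (key j)) eqxx.
  by rewrite (proj2 (key j)) eqxx.
have sub (A : {set 'I_n}) : (forall i, i \in A -> phi i \in chi_b b c) -> (#|A| <= w_b b c)%N.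
  move=> hA; rewrite /w_b -(card_imset _ phi_inj); apply: subset_leq_card.
  by apply/subsetP => _ /imsetP [i hi ->]; apply: hA.
split; apply: sub => i hi; apply: claim; by rewrite hi ?orbT.
Qed.


Lemma exists_cw (F : finFieldType) n (C1 C2 : {vspace 'rV[F]_n}) m :
  (2%:R:F) != 0 -> (m < \dim C1 + \dim C2)%N -> (m <= n + n)%N ->
  exists c, c \in plus_minus_code C1 C2 /\ c != 0 /\
    forall p : 'I_(n+n), (val p < m)%N -> c 0 p = 0.
Proof.
move=> h2 hm hmn.
pose cf (uv : 'rV[F]_n * 'rV[F]_n) := row_mx (uv.1 + uv.2) (uv.1 - uv.2).
pose D := setX [set u in C1] [set v in C2].
pose h uv : {ffun 'I_m -> F} := [ffun j => cf uv 0 (widen_ord hmn j)].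
have cardD : #|D| = (#|F| ^ (\dim C1 + \dim C2))%N.
  by rewrite cardsX !cardsE !card_vspace expnD.
have cfB x y : cf (x.1 - y.1, x.2 - y.2) = cf x - cf y.
  apply/matrixP => i j; rewrite !mxE; case: splitP => k _; rewrite !mxE; ring.
case: (boolP [exists x in D, exists y in D, (x != y) && (h x == h y)]).
  case/existsP => x /andP [xD /existsP [y /andP [yD /andP [xy hxy]]]].
  move: xD yD; rewrite !inE => /andP [x1 x2] /andP [y1 y2].
  exists (cf (x.1 - y.1, x.2 - y.2)); split.
    by rewrite /plus_minus_code /cf /=; apply: imset2_f; rewrite memvB.
  split.
    apply: contra xy; rewrite /cf /= -row_mx0 => /eqP /eq_row_mx [e1 e2].
    have hh (k : 'I_n) : x.1 0 k = y.1 0 k /\ x.2 0 k = y.2 0 k.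
      have := congr1 (fun M : 'M[F]_(1,n) => M 0 k) e1.
      have := congr1 (fun M : 'M[F]_(1,n) => M 0 k) e2.
      rewrite !mxE => f2 f1; have [a b] := half0 h2 f1 f2; split; apply/eqP; rewrite -subr_eq0; apply/eqP.
        by rewrite a.
      by rewrite b.
    apply/eqP; case: x y hh {x1 x2 y1 y2 hxy e1 e2} => [x1 x2] [y1 y2] /= hh.
    congr pair; apply/rowP => k; [exact: (hh k).1 | exact: (hh k).2].
  move=> p hp; rewrite cfB mxE.
  move/eqP/ffunP: hxy => /(_ (Ordinal hp)); rewrite !ffunE.
  have -> : widen_ord hmn (Ordinal hp) = p by apply: val_inj.
  by move=> ->; rewrite !mxE addrN.
move=> hn.
have inj : {in D &, injective h}.
  move=> x y xD yD hxy; apply/eqP; apply: contraNT hn => nxy.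
  by apply/existsP; exists x; rewrite xD /=; apply/existsP; exists y; rewrite yD nxy hxy eqxx.
have := card_in_imset inj.
have : (#|h @: D| <= #|F| ^ m)%N.
  have e : #|{ffun 'I_m -> F}| = (#|F| ^ m)%N by rewrite card_ffun card_ord.
  by rewrite -e; apply: max_card.
move=> H1 H2; rewrite H2 cardD in H1.
have := ltn_exp2l m (\dim C1 + \dim C2) (finNzRing_gt1 F).
by rewrite hm ltnNge H1.
Qed.


Lemma db_le (F : finFieldType) L b (pT : predType 'rV[F]_L) (C : pT) c :
  c \in C -> c != 0 -> (d_b b C <= w_b b c)%N.
Proof.
move=> hc hz; rewrite /d_b.
elim: (index_enum _) (mem_index_enum c) => //= a r IH.
rewrite in_cons big_cons; case/orP => [/eqP <-|hr].
  by rewrite hc hz /=; exact: geq_minl.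
case: ifP => _; last exact: IH.
by apply: leq_trans (geq_minr _ _) (IH hr).
Qed.

Lemma dim_le (F : finFieldType) n (C : {vspace 'rV[F]_n}) : (\dim C <= n)%N.
Proof. by have := dimvS (subvf C); rewrite dimvf /= /dim /= mul1n. Qed.

Lemma wb_zero (F : fieldType) N b m (c : 'rV[F]_N) : (1 <= b)%N -> (m + 1 - b <= N)%N ->
  (forall p : 'I_N, (val p < m)%N -> c 0 p = 0) -> (w_b b c <= N - (m + 1 - b))%N.
Proof.
move=> hb H hz.
pose Zs := [set widen_ord H j | j : 'I_(m + 1 - b)].
have sub : chi_b b c \subset ~: Zs.
  apply/subsetP => i; rewrite !inE; apply: contraL => /imsetP [j _ ->].
  apply/existsPn => k; rewrite negbK; apply/eqP; apply: hz => /=.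
  apply: leq_ltn_trans (leq_mod _ _) _.
  have := ltn_ord j; have := ltn_ord k; lia.
have cZ : #|Zs| = (m + 1 - b)%N by rewrite card_imset ?card_ord //; by move=> x y /(congr1 val) /= e; apply: val_inj.
have := subset_leq_card sub; rewrite /w_b (cardsCs (~: Zs)) setCK cZ card_ord //.
Qed.

End Helpers.

Theorem mainTheorem12 (F : finFieldType) (n b : nat) (C1 C2 : {vspace 'rV[F]_n}) :
  odd #|F| ->
  bsym_MDS b C1 -> bsym_MDS b C2 ->
  d_b b C1 <= d_b b C2 ->
  1 <= b -> b <= minn (\dim C1) (\dim C2) ->
  d_b b C1 <= d_b b (plus_minus_code C1 C2) <= d_b b C1 + d_b b C2 - b.
Proof.
move=> oddF M1 M2 d12 hb hbk.
have h2 := two_neq0 oddF.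
have k1n := dim_le C1; have k2n := dim_le C2.
have hb1 : b <= \dim C1 by move: hbk; rewrite leq_min => /andP [].
have hb2 : b <= \dim C2 by move: hbk; rewrite leq_min => /andP [].
have e1 : d_b b C1 = n - \dim C1 + b by rewrite M1; apply/minn_idPl; lia.
have e2 : d_b b C2 = n - \dim C2 + b by rewrite M2; apply/minn_idPl; lia.
have hbn : b <= n by lia.
apply/andP; split.
  rewrite /d_b; set d1 := d_b b C1.
  apply: (big_ind (fun x => d1 <= x)).
  - rewrite /d1 e1; lia.
  - by move=> x y hx hy; rewrite leq_min hx hy.
  move=> c /andP [/imset2P [u v hu hv ->] hz] /=.
  have [W1 W2] := wb_le u v h2 hbn.
  case: (eqVneq u 0%R) => [u0|un0].
    have vn0 : v != 0%R.
      apply: contra hz => /eqP v0; by rewrite u0 v0 !(addr0, subr0) row_mx0.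
    apply: leq_trans d12 _; apply: leq_trans W2; exact: db_le.
  apply: leq_trans W1; exact: db_le.
set m := (\dim C1 + \dim C2).-1.
have [c [hc [hz hp]]] := @exists_cw F n C1 C2 m h2 ltac:(lia) ltac:(lia).
have := wb_zero hb (ltac:(lia) : m + 1 - b <= n + n) hp.
have := db_le b hc hz.
rewrite e1 e2 /m; lia.
Qed.
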